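(* Let $X$ be a regular Hausdorff locally countably compact topological space. (1) If $X$ is symmetrizable, then $X\times Y$ is symmetrizable for every symmetrizable topological space $Y$. (2) If $X$ has a weak base $(\mathcal{B}_x)_{x\in X}$ with every $\mathcal{B}_x$ countable (countable $\mathrm{S}_0$-character), then $X\times Y$ has countable $\mathrm{S}_0$-character for every topological space $Y$ of countable $\mathrm{S}_0$-character.
   Context: Products are with the product topology. Locally countably compact: every point has a neighborhood $K$ that is countably compact (every countably based filter whose members all meet $K$ has a refining ultrafilter converging to a point of $K$). A semi-metric on a set $Z$ is $d:Z\times Z\to[0,\infty)$ symmetric with $d(x,y)=0\iff x=y$, with balls $B(x,\epsilon)=\{y:d(x,y)<\epsilon\}$; a topological space $Z$ is symmetrizable if for some semi-metric $d$, $O\subset Z$ is open iff for every $x\in O$ there is $\epsilon>0$ with $B(x,\epsilon)\subset O$. A weak base of a topological space $Z$ is a family $(\mathcal{B}_x)_{x\in Z}$ where each $\mathcal{B}_x$ is a filter-base with $x\in\bigcap\mathcal{B}_x$ such that $U$ is open iff for every $x\in U$ there is $V\in\mathcal{B}_x$ with $V\subset U$; $Z$ has countable $\mathrm{S}_0$-character (weakly first-countable) if it has a weak base with each $\mathcal{B}_x$ countable. *)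

(* Defs.v *)
From Stdlib Require Import Reals.
Open Scope R_scope.

Definition set (X : Type) := X -> Prop.
Definition subset {X : Type} (A B : set X) : Prop := forall x, A x -> B x.

Record Topology (X : Type) := {
  open : set X -> Prop;
  open_full : open (fun _ => True);
  open_inter : forall U V, open U -> open V -> open (fun x => U x /\ V x);
  open_union : forall (I : Type) (f : I -> set X),
      (forall i, open (f i)) -> open (fun x => exists i, f i x)
}.
Arguments open {X} t U.

Definition prod_open {X Y : Type} (TX : Topology X) (TY : Topology Y)
  (W : set (X * Y)) : Prop :=
  forall p, W p -> exists U V, open TX U /\ open TY V /\ U (fst p) /\ V (snd p) /\
     forall q, U (fst q) -> V (snd q) -> W q.

Lemma prod_open_full {X Y} (TX : Topology X) (TY : Topology Y) :
  prod_open TX TY (fun _ => True).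
Proof.
  intros p _. exists (fun _ => True), (fun _ => True).
  repeat split; auto using open_full.
Qed.

Lemma prod_open_inter {X Y} (TX : Topology X) (TY : Topology Y) U V :
  prod_open TX TY U -> prod_open TX TY V ->
  prod_open TX TY (fun x => U x /\ V x).
Proof.
  intros HU HV p [Up Vp].
  destruct (HU p Up) as [U1 [V1 [h1 [h2 [h3 [h4 h5]]]]]].
  destruct (HV p Vp) as [U2 [V2 [g1 [g2 [g3 [g4 g5]]]]]].
  exists (fun x => U1 x /\ U2 x), (fun y => V1 y /\ V2 y).
  split; [apply open_inter; auto|]. split; [apply open_inter; auto|].
  split; [split; auto|]. split; [split; auto|].
  intros r [a b] [c d]; split; auto.
Qed.

Lemma prod_open_union {X Y} (TX : Topology X) (TY : Topology Y)
  (I : Type) (f : I -> set (X * Y)) :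
  (forall i, prod_open TX TY (f i)) ->
  prod_open TX TY (fun x => exists i, f i x).
Proof.
  intros H p [i Hi].
  destruct (H i p Hi) as [U [V [h1 [h2 [h3 [h4 h5]]]]]].
  exists U, V. repeat split; auto. intros q a b. exists i. auto.
Qed.

Definition prod_topology {X Y : Type} (TX : Topology X) (TY : Topology Y)
  : Topology (X * Y) :=
  {| open := prod_open TX TY;
     open_full := prod_open_full TX TY;
     open_inter := prod_open_inter TX TY;
     open_union := prod_open_union TX TY |}.

Definition hausdorff {X} (T : Topology X) : Prop :=
  forall x y : X, x <> y -> exists U V, open T U /\ open T V /\ U x /\ V y /\
    forall z, U z -> V z -> False.

Definition closed {X} (T : Topology X) (C : set X) : Prop :=
  open T (fun x => ~ C x).

Definition regular {X} (T : Topology X) : Prop :=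
  forall (x : X) (C : set X), closed T C -> ~ C x ->
    exists U V, open T U /\ open T V /\ U x /\ subset C V /\
      forall z, U z -> V z -> False.

Definition is_filter {X} (F : set (set X)) : Prop :=
  F (fun _ => True) /\
  (forall A B, F A -> subset A B -> F B) /\
  (forall A B, F A -> F B -> F (fun x => A x /\ B x)) /\
  ~ F (fun _ => False).

Definition is_ultrafilter {X} (F : set (set X)) : Prop :=
  is_filter F /\ forall G, is_filter G -> subset F G -> subset G F.

Definition countably_based {X} (F : set (set X)) : Prop :=
  exists B : nat -> set X, (forall n, F (B n)) /\
    forall A, F A -> exists n, subset (B n) A.

Definition converges {X} (T : Topology X) (F : set (set X)) (x : X) : Prop :=
  forall U, open T U -> U x -> F U.

Definition countably_compact {X} (T : Topology X) (K : set X) : Prop :=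
  forall F, is_filter F -> countably_based F ->
    (forall A, F A -> exists x, A x /\ K x) ->
    exists U x, is_ultrafilter U /\ subset F U /\ K x /\ converges T U x.

Definition neighborhood {X} (T : Topology X) (K : set X) (x : X) : Prop :=
  exists U, open T U /\ U x /\ subset U K.

Definition locally_countably_compact {X} (T : Topology X) : Prop :=
  forall x, exists K, neighborhood T K x /\ countably_compact T K.

Definition semimetric {Z} (d : Z -> Z -> R) : Prop :=
  (forall x y, 0 <= d x y) /\ (forall x y, d x y = d y x) /\
  (forall x y, d x y = 0 <-> x = y).

Definition ball {Z} (d : Z -> Z -> R) (x : Z) (e : R) : set Z :=
  fun y => d x y < e.

Definition symmetrizable {Z} (T : Topology Z) : Prop :=
  exists d, semimetric d /\
    forall O, open T O <-> forall x, O x -> exists e, 0 < e /\ subset (ball d x e) O.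

Definition filter_base {Z} (B : set (set Z)) : Prop :=
  (exists A, B A) /\
  forall A1 A2, B A1 -> B A2 -> exists A3, B A3 /\ subset A3 A1 /\ subset A3 A2.

Definition weak_base {Z} (T : Topology Z) (B : Z -> set (set Z)) : Prop :=
  (forall x, filter_base (B x)) /\
  (forall x A, B x A -> A x) /\
  forall U, open T U <-> forall x, U x -> exists V, B x V /\ subset V U.

Definition countable_family {Z} (C : set (set Z)) : Prop :=
  exists f : nat -> set Z, forall A, C A -> exists n, f n = A.

Definition countable_S0_character {Z} (T : Topology Z) : Prop :=
  exists B, weak_base T B /\ forall x, countable_family (B x).

(* Main.v *)
Require Import Defs.
From Stdlib Require Import Reals Lia Lra Classical ClassicalEpsilon FunctionalExtensionality PropExtensionality Cantor.

Lemma choice_gen {A B : Type} (P : A -> B -> Prop) :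
  (forall a, exists b, P a b) -> exists f : A -> B, forall a, P a (f a).
Proof.
  intros H. exists (fun a => proj1_sig (constructive_indefinite_description _ (H a))).
  intros a. exact (proj2_sig (constructive_indefinite_description _ (H a))).
Qed.

Lemma open_ext {X} (T : Topology X) (A B : set X) :
  (forall z, A z <-> B z) -> open T A -> open T B.
Proof.
  intros H HA. assert (A = B) as E.
  { apply functional_extensionality; intros z; apply propositional_extensionality; auto. }
  subst; auto.
Qed.

Definition Cprops {X} (T : Topology X) (C : X -> nat -> set X) : Prop :=
  (forall x n, C x n x) /\
  (forall x n m, (n <= m)%nat -> subset (C x m) (C x n)) /\
  (forall U, open T U <-> forall x, U x -> exists n, subset (C x n) U).

Lemma Cprops_nbhd {X} (T : Topology X) C : Cprops T C ->
  forall U x, open T U -> U x -> exists n, subset (C x n) U.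
Proof. intros [_ [_ H]] U x HU Ux. apply H; auto. Qed.

Section SC.
Variables (X : Type) (TX : Topology X) (C : X -> nat -> set X).
Hypothesis HC : Cprops TX C.
Hypothesis HH : hausdorff TX.

Lemma sep w v : w <> v -> exists k, ~ C w k v.
Proof.
  intros Hne. destruct (HH w v Hne) as [U [V [oU [oV [Uw [Vv D]]]]]].
  destruct (Cprops_nbhd TX C HC U w oU Uw) as [k Hk].
  exists k. intros Hc. apply (D v); auto.
Qed.

Lemma SC (K K' : set X) (x : nat -> X) :
  countably_compact TX K -> closed TX K' -> subset K' K ->
  (forall m, K' (x m)) ->
  exists w psi, K' w /\ (forall i, (i <= psi i)%nat) /\ forall i, C w i (x (psi i)).
Proof.
  intros cK clK' sub Hx.
  destruct HC as [Cx [Cdec Copen]].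
  set (S := fun j v => exists m, (j <= m)%nat /\ v = x m).
  destruct (classic (exists j, ~ closed TX (S j))) as [[j Hj] | Hall].
  -
    unfold closed in Hj. rewrite Copen in Hj.
    apply not_all_ex_not in Hj as [w Hw].
    apply imply_to_and in Hw as [nSw Hw].
    assert (Hm : forall n, exists m, (j <= m)%nat /\ C w n (x m)).
    { intros n. apply NNPP; intros Hn. apply Hw. exists n.
      intros v Cv [m [jm ->]]. apply Hn; eauto. }
    apply choice_gen in Hm as [mk Hmk].
    assert (Hfin : forall M, exists ks, forall m, (j <= m)%nat -> (m < M)%nat -> ~ C w ks (x m)).
    { induction M as [|M [ks IH]].
      - exists 0%nat; intros; lia.
      - destruct (classic (j <= M)%nat) as [jM|jM].
        + assert (w <> x M) as ne by (intros E; apply nSw; exists M; auto).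
          destruct (sep w (x M) ne) as [k1 Hk1].
          exists (Nat.max ks k1). intros m jm mM Cm.
          destruct (Nat.eq_dec m M) as [->|mne].
          * apply Hk1. apply (Cdec w k1 (Nat.max ks k1)); auto; lia.
          * apply (IH m jm ltac:(lia)). apply (Cdec w ks (Nat.max ks k1)); auto; lia.
        + exists ks. intros m jm mM. apply IH; lia. }
    assert (Hunb : forall K0 M, exists k, (K0 <= k)%nat /\ (M <= mk k)%nat).
    { intros K0 M. apply NNPP; intros Hn.
      destruct (Hfin M) as [ks Hks].
      set (k := Nat.max ks K0).
      destruct (Hmk k) as [jk Ck].
      assert (mk k < M)%nat.
      { destruct (Nat.lt_ge_cases (mk k) M) as [|ge]; auto.
        exfalso; apply Hn; exists k; split; [unfold k; lia|auto]. }
      apply (Hks (mk k)); auto. apply (Cdec w ks k); auto. unfold k; lia. }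
    assert (Hh : forall i, exists k, (i <= k)%nat /\ (i <= mk k)%nat) by (intros; apply Hunb).
    apply choice_gen in Hh as [h Hh].
    exists w, (fun i => mk (h i)). split; [|split].
    + apply NNPP; intros nK. destruct (Copen (fun z => ~ K' z)) as [Co _].
      destruct (Co clK' w nK) as [n Hn].
      apply (Hn (x (mk n))); [apply Hmk | apply Hx].
    + intros i; apply Hh.
    + intros i. destruct (Hh i) as [h1 _]. apply (Cdec w i (h i)); auto. apply Hmk.
  -
    set (F := fun A : set X => exists j, forall m, (j <= m)%nat -> A (x m)).
    assert (fF : is_filter F).
    { split; [exists 0%nat; auto|]. split; [intros A B [j Hj] sAB; exists j; auto|].
      split; [intros A B [j1 H1] [j2 H2]; exists (Nat.max j1 j2); intros m Hm; split;
              [apply H1|apply H2]; lia|].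
      intros [j Hj]. apply (Hj j); auto. }
    assert (cbF : countably_based F).
    { exists S. split.
      - intros n. exists n. intros m Hm. exists m; auto.
      - intros A [j Hj]. exists j. intros v [m [jm ->]]. auto. }
    assert (mF : forall A, F A -> exists z, A z /\ K z).
    { intros A [j Hj]. exists (x j). split; auto. }
    destruct (cK F fF cbF mF) as [U [z [[fU _] [FU [Kz conv]]]]].
    assert (Sz : forall j, S j z).
    { intros j. apply NNPP; intros nS.
      assert (Hcl : closed TX (S j)) by (apply NNPP; intros Hn; apply Hall; eauto).
      assert (U1 : U (fun v => ~ S j v)) by (apply conv; auto).
      assert (U2 : U (S j)).
      { apply FU. exists j. intros m jm. exists m; auto. }
      destruct fU as [_ [up [inter nF]]].
      apply nF. apply (up _ _ (inter _ _ U1 U2)). intros v [a b]; auto. }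
    assert (He : forall j, exists m, (j <= m)%nat /\ z = x m) by exact Sz.
    apply choice_gen in He as [e He].
    exists z, e. split; [|split].
    + destruct (He 0%nat) as [_ ->]. auto.
    + intros i; apply He.
    + intros i. destruct (He i) as [_ E]. rewrite <- E. auto.
Qed.
End SC.

Lemma core (X Y : Type) (TX : Topology X) (TY : Topology Y) C D :
  regular TX -> hausdorff TX -> locally_countably_compact TX ->
  Cprops TX C -> Cprops TY D ->
  forall W, prod_open TX TY W <->
    forall p, W p -> exists n m, forall q, C (fst p) n (fst q) -> D (snd p) m (snd q) -> W q.
Proof.
  intros reg hau lcc HC HD W. split.
  - intros HW p Wp. destruct (HW p Wp) as [U [V [oU [oV [Up [Vp H]]]]]].
    destruct (Cprops_nbhd TX C HC U _ oU Up) as [n Hn].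
    destruct (Cprops_nbhd TY D HD V _ oV Vp) as [m Hm].
    exists n, m. intros q a b. apply H; auto.
  - intros HW [x y] Wxy.
    pose proof HC as [Cx [Cdec Copen]]. pose proof HD as [Dx [Ddec Dopen]].
    set (Wy := fun z => W (z, y)).
    assert (oWy : open TX Wy).
    { apply Copen. intros z Wz. destruct (HW _ Wz) as [n [m H]]. exists n.
      intros v Cv. apply (H (v, y)); simpl; auto. }
    destruct (lcc x) as [K [[O [oO [Ox sOK]]] cK]].
    assert (Hc : closed TX (fun z => ~ (Wy z /\ O z))).
    { unfold closed. apply (open_ext TX (fun z => Wy z /\ O z)).
      - intros z; split; [tauto|intros H; apply NNPP; auto].
      - apply open_inter; auto. }
    destruct (reg x _ Hc ltac:(intros H; apply H; split; auto))
      as [U [V' [oU [oV' [Ux [sV' disj]]]]]].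
    set (K' := fun z => ~ V' z).
    assert (clK' : closed TX K').
    { unfold closed. apply (open_ext TX V'); auto.
      intros z; unfold K'; split; [tauto|intros H; apply NNPP; auto]. }
    assert (K'W : forall z, K' z -> Wy z /\ O z).
    { intros z Kz. apply NNPP; intros H. apply Kz. apply sV'. auto. }
    set (V := fun y' => forall z, K' z -> W (z, y')).
    exists U, V. split; [auto|]. split; [|split; [simpl; auto|split]].
    + apply Dopen. intros y' Vy'. apply NNPP; intros Hn.
      assert (Hs : forall m, exists p : X * Y, D y' m (snd p) /\ K' (fst p) /\ ~ W p).
      { intros m. apply NNPP; intros Hm. apply Hn. exists m. intros v Dv z Kz.
        apply NNPP; intros nW. apply Hm. exists (z, v). simpl; auto. }
      apply choice_gen in Hs as [s Hs].
      destruct (SC X TX C HC hau K K' (fun m => fst (s m)) cK clK'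
                  ltac:(intros z Kz; apply sOK, K'W, Kz) ltac:(intros m; apply Hs))
        as [w [psi [Kw [Hpsi Hc2]]]].
      destruct (HW (w, y') (Vy' w Kw)) as [n [m H]].
      set (i := Nat.max n m).
      destruct (Hs (psi i)) as [Dm [_ nW]]. apply nW. apply H; simpl.
      * apply (Cdec w n i); [unfold i; lia|]. apply Hc2.
      * apply (Ddec y' m (psi i)); auto. specialize (Hpsi i). unfold i in *; lia.
    + simpl. intros z Kz. apply (K'W z Kz).
    + intros [a b] Ua Vb. simpl in *. apply Vb. intros Va. apply (disj a); auto.
Qed.
Open Scope R_scope.

Lemma inv_pos n : 0 < / (INR n + 1).
Proof. apply Rinv_0_lt_compat. pose proof (pos_INR n). lra. Qed.

Lemma small e : 0 < e -> exists n, / (INR n + 1) < e.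
Proof.
  intros He. destruct (archimed_cor1 e He) as [N [HN N0]].
  exists (N - 1)%nat. replace (INR (N - 1) + 1) with (INR N); auto.
  rewrite minus_INR by lia. simpl. lra.
Qed.

Lemma inv_mono n m : (n <= m)%nat -> / (INR m + 1) <= / (INR n + 1).
Proof.
  intros H. apply Rinv_le_contravar. pose proof (pos_INR n); lra.
  apply le_INR in H; lra.
Qed.

Lemma sym_Cprops {Z} (T : Topology Z) d : semimetric d ->
  (forall O, open T O <-> forall x, O x -> exists e, 0 < e /\ subset (ball d x e) O) ->
  Cprops T (fun x n => ball d x (/ (INR n + 1))).
Proof.
  intros [d0 [ds dz]] Ho. split; [|split].
  - intros x n. unfold ball. rewrite (proj2 (dz x x) eq_refl). apply inv_pos.
  - intros x n m H y. unfold ball. pose proof (inv_mono n m H). lra.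
  - intros U. rewrite Ho. split.
    + intros H x Ux. destruct (H x Ux) as [e [He sub]]. destruct (small e He) as [n Hn].
      exists n. intros y By. apply sub. unfold ball in *. lra.
    + intros H x Ux. destruct (H x Ux) as [n Hn]. exists (/ (INR n + 1)).
      split; auto using inv_pos.
Qed.

Fixpoint iterC {A} (g0 : A) (s : nat -> A -> A) (n : nat) : A :=
  match n with O => g0 | S k => s k (iterC g0 s k) end.

Lemma S0_Cprops {Z} (T : Topology Z) : countable_S0_character T ->
  exists C, Cprops T C.
Proof.
  intros [B [[fb [mem Ho]] cnt]].
  apply choice_gen in cnt as [f Hf].
  assert (Hg : forall (p : Z * nat), exists A, B (fst p) A /\ (B (fst p) (f (fst p) (snd p)) -> A = f (fst p) (snd p))).
  { intros [x n]. simpl. destruct (classic (B x (f x n))) as [Hb|Hb].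
    - exists (f x n); auto.
    - destruct (fb x) as [[A0 HA0] _]. exists A0; split; auto; tauto. }
  apply choice_gen in Hg as [g Hg].
  assert (Hs : forall (p : Z * nat * set Z), exists A',
     B (fst (fst p)) (snd p) -> B (fst (fst p)) A' /\ subset A' (snd p) /\ subset A' (g (fst (fst p), S (snd (fst p))))).
  { intros [[x n] A]; simpl. destruct (classic (B x A)) as [HA|HA].
    - destruct (fb x) as [_ H2]. destruct (H2 A (g (x, S n))) as [A3 [h1 [h2 h3]]]; auto.
      apply (Hg (x, S n)). exists A3; auto.
    - exists A; tauto. }
  apply choice_gen in Hs as [s Hs].
  set (C := fun x n => iterC (g (x, 0%nat)) (fun k A => s (x, k, A)) n).
  assert (HB : forall x n, B x (C x n) /\ subset (C x n) (g (x, n))).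
  { intros x n. induction n as [|n IH].
    - simpl. split; [apply (Hg (x, 0%nat))|intros z; auto].
    - simpl. destruct IH as [IH1 _]. destruct (Hs (x, n, C x n) IH1) as [a [b c]]. auto. }
  assert (Hstep : forall x n, subset (C x (S n)) (C x n)).
  { intros x n. simpl. destruct (Hs (x, n, C x n) (proj1 (HB x n))) as [a [b c]]. auto. }
  exists C. split; [|split].
  - intros x n. apply mem. apply HB.
  - intros x n m H. induction H; [intros z; auto|]. intros z Hz. apply IHle, Hstep, Hz.
  - intros U. rewrite Ho. split.
    + intros H x Ux. destruct (H x Ux) as [V [BV sV]]. destruct (Hf x V BV) as [n En].
      exists n. intros z Cz. apply sV. rewrite <- En.
      destruct (Hg (x, n)) as [_ E]. simpl in E. rewrite <- E by (rewrite En; auto).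
      apply (proj2 (HB x n)); auto.
    + intros H x Ux. destruct (H x Ux) as [n Hn]. exists (C x n). split; auto. apply HB.
Qed.

Theorem theorem6p1 (X : Type) (TX : Topology X) :
  regular TX -> hausdorff TX -> locally_countably_compact TX ->
  (symmetrizable TX ->
     forall (Y : Type) (TY : Topology Y),
       symmetrizable TY -> symmetrizable (prod_topology TX TY)) /\
  (countable_S0_character TX ->
     forall (Y : Type) (TY : Topology Y),
       countable_S0_character TY -> countable_S0_character (prod_topology TX TY)).
Proof.
  intros reg hau lcc. split.
  - intros [dX [smX HoX]] Y TY [dY [smY HoY]].
    pose proof (sym_Cprops TX dX smX HoX) as HC.
    pose proof (sym_Cprops TY dY smY HoY) as HD.
    exists (fun p q => Rmax (dX (fst p) (fst q)) (dY (snd p) (snd q))).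
    destruct smX as [x0 [xs xz]]. destruct smY as [y0 [ys yz]].
    split.
    + split; [|split].
      * intros p q. pose proof (x0 (fst p) (fst q)). apply Rle_trans with (1 := H), Rmax_l.
      * intros p q. rewrite xs, ys. auto.
      * intros [a b] [a' b']; simpl. split.
        -- intros E. pose proof (x0 a a'). pose proof (y0 b b').
           pose proof (Rmax_l (dX a a') (dY b b')). pose proof (Rmax_r (dX a a') (dY b b')).
           assert (dX a a' = 0) by lra. assert (dY b b' = 0) by lra.
           apply xz in H3. apply yz in H4. subst; auto.
        -- intros E. inversion E; subst. rewrite (proj2 (xz a' a') eq_refl), (proj2 (yz b' b') eq_refl).
           apply Rmax_left; lra.
    + intros O. cbn [open prod_topology]. rewrite (core X Y TX TY _ _ reg hau lcc HC HD).
      split.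
      * intros H p Op. destruct (H p Op) as [n [m Hnm]].
        exists (Rmin (/ (INR n + 1)) (/ (INR m + 1))). split.
        -- apply Rmin_glb_lt; apply inv_pos.
        -- intros q Bq. unfold ball in Bq. apply Hnm; unfold ball.
           ++ pose proof (Rmax_l (dX (fst p) (fst q)) (dY (snd p) (snd q))).
              pose proof (Rmin_l (/ (INR n + 1)) (/ (INR m + 1))). lra.
           ++ pose proof (Rmax_r (dX (fst p) (fst q)) (dY (snd p) (snd q))).
              pose proof (Rmin_r (/ (INR n + 1)) (/ (INR m + 1))). lra.
      * intros H p Op. destruct (H p Op) as [e [He sub]]. destruct (small e He) as [n Hn].
        exists n, n. intros q a b. apply sub. unfold ball in *.
        apply Rmax_lub_lt; lra.
  - intros HX Y TY HY.
    destruct (S0_Cprops TX HX) as [C HC]. destruct (S0_Cprops TY HY) as [D HD].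
    pose proof HC as [Cx [Cdec _]]. pose proof HD as [Dx [Ddec _]].
    set (box := fun (p : X * Y) (nm : nat * nat) (q : X * Y) => C (fst p) (fst nm) (fst q) /\ D (snd p) (snd nm) (snd q)).
    exists (fun p A => exists nm, A = box p nm). split.
    + split; [|split].
      * intros p. split; [exists (box p (0,0)%nat), (0,0)%nat; auto|].
        intros A1 A2 [[n1 m1] ->] [[n2 m2] ->].
        exists (box p (Nat.max n1 n2, Nat.max m1 m2)). split; [eauto|].
        unfold box; simpl; split; intros q [a b]; split;
          first [apply (Cdec _ _ (Nat.max n1 n2)) | apply (Ddec _ _ (Nat.max m1 m2))]; auto; lia.
      * intros p A [nm ->]. unfold box; split; auto.
      * intros U. cbn [open prod_topology]. rewrite (core X Y TX TY _ _ reg hau lcc HC HD).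
        split.
        -- intros H p Up. destruct (H p Up) as [n [m Hnm]]. exists (box p (n, m)).
           split; [eauto|]. intros q [a b]; auto.
        -- intros H p Up. destruct (H p Up) as [V [[[n m] ->] sV]]. exists n, m.
           intros q a b. apply sV. split; auto.
    + intros p. exists (fun k => box p (Cantor.of_nat k)). intros A [nm ->].
      exists (Cantor.to_nat nm). rewrite Cantor.cancel_of_to. auto.
Qed.
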